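(* Let $m\ge 1$, $n=2m$, and let $g(x_0,\ldots,x_{n-1})$ be a reduced polynomial in $\mathbb{F}_2[x_0,\ldots,x_{n-1}]$ (equivalently a Boolean function on $\mathbb{F}_2^n$) such that: (1) for every $0\le i\le m-1$, $g$ is unchanged when the variables $x_i$ and $x_{i+m}$ are interchanged; (2) for every $0\le i\le m-1$, no monomial of $g$ (with nonzero coefficient) contains both $x_i$ and $x_{i+m}$; (3) $g$ is rotation symmetric, i.e. $g(x_1,\ldots,x_{n-1},x_0)=g(x_0,\ldots,x_{n-1})$. Then there exists a rotation symmetric polynomial $\gamma(X_0,\ldots,X_{m-1})\in\mathbb{F}_2[X_0,\ldots,X_{m-1}]$ (i.e. $\gamma(X_0,X_1,\ldots,X_{m-1})=\gamma(X_1,\ldots,X_{m-1},X_0)$) such that $$g(x_0,\ldots,x_{n-1})=\gamma(x_0+x_m,\,x_1+x_{m+1},\,\ldots,\,x_{m-1}+x_{2m-1}).$$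
   Context: A reduced polynomial in $\mathbb{F}_2[x_0,\ldots,x_{n-1}]$ is one of the form $\sum_{u\in\mathbb{F}_2^n}c_u\prod_{i}x_i^{u_i}$ (each variable with exponent at most 1); Boolean functions on $\mathbb{F}_2^n$ are identified with such polynomials (their algebraic normal form). *)

(* Defs.v *)
From HB Require Import structures.
From mathcomp Require Import all_boot all_order all_algebra.
From mathcomp Require Import mpoly.
Set Implicit Arguments. Unset Strict Implicit. Unset Printing Implicit Defensive.
Import GRing.Theory.
Local Open Scope ring_scope.

Definition reduced (n : nat) (p : {mpoly 'F_2[n]}) : Prop :=
  forall (mo : 'X_{1..n}), mo \in msupp p -> forall i : 'I_n, (mo i <= 1)%N.

(* Cyclic shift of variables: p(x_1,...,x_{n-1},x_0), i.e. x_j := x_{j+1 mod n}. *)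
Definition rotate (n : nat) (p : {mpoly 'F_2[n]}) : {mpoly 'F_2[n]} :=
  p \mPo [tuple 'X_(ordS i) | i < n].

Definition rot_sym (n : nat) (p : {mpoly 'F_2[n]}) : Prop := rotate p = p.

Definition swap_vars (n : nat) (a b : 'I_n) (p : {mpoly 'F_2[n]}) : {mpoly 'F_2[n]} :=
  p \mPo [tuple 'X_(if i == a then b else if i == b then a else i) | i < n].

(* Main.v *)
Require Import Defs.
From HB Require Import structures.
From mathcomp Require Import all_boot all_order all_algebra.
From mathcomp Require Import all_fingroup mpoly.
Import GRing.Theory.
Local Open Scope ring_scope.

Lemma comp_mpolyA n k l (R : comRingType) (p : {mpoly R[n]})
  (lq : n.-tuple {mpoly R[k]}) (lr : k.-tuple {mpoly R[l]}) :
  (p \mPo lq) \mPo lr = p \mPo [tuple (tnth lq i \mPo lr) | i < n].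
Proof.
rewrite [p \mPo lq]comp_mpolyEX [RHS]comp_mpolyEX raddf_sum /=.
apply eq_bigr => mo _.
rewrite comp_mpolyZ !comp_mpolyX rmorph_prod; congr (_ *: _).
by apply eq_bigr => i _; rewrite rmorphXn /= tnth_mktuple.
Qed.

Lemma comp_mpoly_ext n k (R : ringType) (p : {mpoly R[n]})
  (t1 t2 : n.-tuple {mpoly R[k]}) :
  (forall i, tnth t1 i = tnth t2 i) -> p \mPo t1 = p \mPo t2.
Proof. by move=> H; congr (_ \mPo _); apply: eq_from_tnth. Qed.

Lemma swap_msym N (a b : 'I_N) (p : {mpoly 'F_2[N]}) :
  swap_vars a b p = msym (tperm a b) p.
Proof.
rewrite -[RHS]comp_mpoly_id msym_mPo /swap_vars; apply: comp_mpoly_ext => i.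
rewrite !tnth_mktuple; congr 'X_ _.
case: (tpermP a b i) => [->|->|/eqP ia /eqP ib]; rewrite ?eqxx //.
  by case: eqP.
by rewrite (negbTE ia) (negbTE ib).
Qed.


Lemma prod_ab (R : comRingType) N (a b : 'I_N) (F : 'I_N -> R) : a != b ->
  \prod_i F i = F a * F b * \prod_(i | (i != a) && (i != b)) F i.
Proof.
move=> hab; rewrite (bigD1 a) //= (bigD1 b) /=; last by rewrite eq_sym.
by rewrite mulrA.
Qed.

Lemma coef_sel N (p : {mpoly 'F_2[N]}) (P : pred 'X_{1..N}) k :
  \sum_(mo <- msupp p) p@_mo * ((P mo)%:R * (mo == k)%:R) = (P k)%:R * p@_k.
Proof.
transitivity (\sum_(mo <- msupp p) (P k)%:R * (p@_mo * (mo == k)%:R)).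
  apply eq_bigr => mo _; case: eqP => [->|_]; last by rewrite !mulr0.
  by rewrite mulrCA.
rewrite -mulr_sumr; congr (_ * _).
rewrite {3}[p]mpolyE raddf_sum /=; apply eq_bigr => mo _.
by rewrite mcoeffZ mcoeffX.
Qed.

Section Pair.
Variables (N : nat) (a b : 'I_N).
Hypothesis hab : a != b.

Definition theta : N.-tuple {mpoly 'F_2[N]} :=
  [tuple (if i == a then 'X_a + 'X_b else if i == b then 0 else 'X_i) | i < N].

Definition sw (k : 'X_{1..N}) : 'X_{1..N} := [multinom k (tperm a b i) | i < N].

Definition Rest (mo : 'X_{1..N}) : {mpoly 'F_2[N]} :=
  \prod_(i | (i != a) && (i != b)) 'X_i ^+ (mo i).

Lemma swK : involutive sw.
Proof. by move=> k; apply/mnmP => i; rewrite !mnmE tpermK. Qed.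

Lemma X_split mo : 'X_[mo] = 'X_a ^+ (mo a) * 'X_b ^+ (mo b) * Rest mo.
Proof. by rewrite mpolyXE_id (@prod_ab _ _ a b _ hab). Qed.

Lemma Rest_sw mo : Rest (sw mo) = Rest mo.
Proof.
apply eq_bigr => i /andP[ia ib]; rewrite mnmE tpermD // eq_sym //.
Qed.

Lemma X_sw mo : 'X_[sw mo] = 'X_a ^+ (mo b) * 'X_b ^+ (mo a) * Rest mo.
Proof. by rewrite X_split Rest_sw !mnmE tpermL tpermR. Qed.

Lemma mono_theta (mo : 'X_{1..N}) : (mo a <= 1)%N -> ~~ ((0 < mo a) && (0 < mo b))%N ->
  'X_[mo] \mPo theta =
  (if mo b == 0%N then 'X_[mo] else 0) +
  (if (mo b == 0%N) && (mo a == 1%N) then 'X_[sw mo] else 0).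
Proof.
move=> ha hd.
have hba : (b == a) = false by apply/negbTE; rewrite eq_sym.
rewrite comp_mpolyX (@prod_ab _ _ a b _ hab) !tnth_mktuple eqxx hba.
have -> : \prod_(i | (i != a) && (i != b)) tnth theta i ^+ mo i = Rest mo.
  apply eq_bigr => i /andP[ia ib]; rewrite tnth_mktuple.
  by rewrite (negbTE ia) (negbTE ib).
rewrite (X_sw mo) (X_split mo) eqxx.
case hb: (mo b) => [|nb]; last by rewrite expr0n /= !mulr0 !mul0r addr0.
rewrite !expr0 !mulr1 eqxx /=.
case: (mo a) ha => [|[|na]] //= _.
  by rewrite !expr0 addr0.
by rewrite !expr1 mul1r mulrDl.
Qed.

Lemma pair_theta (p : {mpoly 'F_2[N]}) :
  (forall mo, mo \in msupp p -> (mo a <= 1)%N /\ (mo b <= 1)%N) ->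
  msym (tperm a b) p = p ->
  (forall mo, mo \in msupp p -> ~~ ((0 < mo a) && (0 < mo b))%N) ->
  p \mPo theta = p.
Proof.
move=> Hred Hsw Hdis; apply/mpolyP => k.
rewrite comp_mpolyEX raddf_sum /=.
transitivity (\sum_(mo <- msupp p) p@_mo * (((mo b == 0%N))%:R * (mo == k)%:R)
   + \sum_(mo <- msupp p) p@_mo * ((((mo b == 0%N) && (mo a == 1%N)))%:R * (mo == sw k)%:R)).
  rewrite -big_split /= big_seq [RHS]big_seq; apply eq_bigr => mo hmo.
  have [h1 _] := Hred _ hmo.
  rewrite mono_theta; [|by []|by apply: Hdis]. rewrite mcoeffZ mcoeffD -mulrDr; congr (_ * _).
  congr (_ + _).
    by case: eqP; rewrite ?mcoeff0 ?mcoeffX ?mul1r ?mul0r.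
  case: ifP => _; rewrite ?mcoeff0 ?mcoeffX ?mul1r ?mul0r //.
  by rewrite -(inj_eq (can_inj swK)) swK.
rewrite (@coef_sel _ p (fun mo => mo b == 0%N)) (@coef_sel _ p (fun mo => (mo b == 0%N) && (mo a == 1%N))).
have hs : p@_(sw k) = p@_k by rewrite -{2}Hsw mcoeff_sym.
rewrite hs !mnmE tpermL tpermR.
have [hk|hk] := boolP (k \in msupp p); last first.
  by rewrite memN_msupp_eq0 // !mulr0 addr0.
have [h1 h2] := Hred _ hk; have hd := Hdis _ hk.
case hb: (k b) h2 hd => [|[|nb]] //= _.
  by move=> _; rewrite mul1r andbF mul0r addr0.
case ha: (k a) => [|na] //= _.
by rewrite mul0r add0r mul1r.
Qed.
End Pair.


Lemma split_l m n (i : 'I_m) : split (lshift n i) = inl i.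
Proof. exact: (unsplitK (inl i)). Qed.
Lemma split_r m n (i : 'I_n) : split (rshift m i) = inr i.
Proof. exact: (unsplitK (inr i)). Qed.

Definition psi n (k : nat) : (n+n).-tuple {mpoly 'F_2[n+n]} :=
 [tuple match split j with
   | inl i => if (i < k)%N then 'X_(lshift n i) + 'X_(rshift n i) else 'X_j
   | inr i => if (i < k)%N then 0 else 'X_j end | j < n+n].

Lemma psi_l n k (i : 'I_n) : tnth (psi n k) (lshift n i) =
  if (i < k)%N then 'X_(lshift n i) + 'X_(rshift n i) else 'X_(lshift n i).
Proof. by rewrite tnth_mktuple split_l. Qed.
Lemma psi_r n k (i : 'I_n) : tnth (psi n k) (rshift n i) =
  if (i < k)%N then 0 else 'X_(rshift n i).
Proof. by rewrite tnth_mktuple split_r. Qed.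

Lemma ord_cases n (P : 'I_(n+n) -> Prop) :
  (forall i : 'I_n, P (lshift n i)) -> (forall i : 'I_n, P (rshift n i)) ->
  forall j, P j.
Proof. by move=> hl hr j; rewrite -[j]splitK; case: (split j). Qed.

Lemma psi_all n (g : {mpoly 'F_2[n + n]}) :
  reduced g ->
  (forall i : 'I_n, swap_vars (lshift n i) (rshift n i) g = g) ->
  (forall (i : 'I_n) (mo : 'X_{1..n + n}), mo \in msupp g ->
      ~~ ((0 < mo (lshift n i))%N && (0 < mo (rshift n i))%N)) ->
  forall k, (k <= n)%N -> g \mPo psi n k = g.
Proof.
move=> Hred Hsw Hdis; elim=> [_|k IH hk].
  rewrite -[RHS]comp_mpoly_id; apply: comp_mpoly_ext.
  by apply: ord_cases => i; rewrite ?psi_l ?psi_r tnth_mktuple.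
have hk' : (k < n)%N by [].
pose i0 := Ordinal hk'.
have hab : lshift n i0 != rshift n i0 by rewrite eq_lrshift.
transitivity ((g \mPo @theta _ (lshift n i0) (rshift n i0)) \mPo psi n k); last first.
  rewrite (@pair_theta _ _ _ hab) ?IH ?(ltnW hk') //.
  - by move=> mo hmo; split; apply: Hred.
  - by rewrite -swap_msym.
  - by move=> mo hmo; apply: Hdis.
rewrite comp_mpolyA; apply: comp_mpoly_ext; apply: ord_cases => i;
  rewrite !tnth_mktuple ?split_l ?split_r ?eq_lshift ?eq_rshift ?eq_lrshift ?eq_rlshift.
  case: (eqVneq i i0) => [->|ne] /=.
    by rewrite ltnSn comp_mpolyD !comp_mpolyXU -!tnth_nth psi_l psi_r ltnn.
  rewrite comp_mpolyXU -tnth_nth psi_l ltnS leq_eqVlt.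
  suff -> : (nat_of_ord i == k) = false by [].
  by apply/negbTE; apply: contra ne => /eqP h; apply/eqP/val_inj.
case: (eqVneq i i0) => [->|ne] /=.
  by rewrite ltnSn comp_mpoly0.
rewrite comp_mpolyXU -tnth_nth psi_r ltnS leq_eqVlt.
suff -> : (nat_of_ord i == k) = false by [].
by apply/negbTE; apply: contra ne => /eqP h; apply/eqP/val_inj.
Qed.

From mathcomp Require Import zify.

Theorem lemma1 (m : nat) (hm : (0 < m)%N) (g : {mpoly 'F_2[m + m]}) :
  reduced g ->
  (forall i : 'I_m, swap_vars (lshift m i) (rshift m i) g = g) ->
  (forall (i : 'I_m) (mo : 'X_{1..m + m}), mo \in msupp g ->
      ~~ ((0 < mo (lshift m i))%N && (0 < mo (rshift m i))%N)) ->
  rot_sym g ->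
  exists gamma : {mpoly 'F_2[m]},
    rot_sym gamma /\
    g = gamma \mPo [tuple ('X_(lshift m i) + 'X_(rshift m i) : {mpoly 'F_2[m + m]}) | i < m].
Proof.
move=> Hred Hsw Hdis; rewrite /rot_sym /rotate => Hrot.
pose tau : (m+m).-tuple {mpoly 'F_2[m]} :=
  [tuple match split j with inl i => 'X_i | inr _ => 0 end | j < m+m].
have tau_l i : tnth tau (lshift m i) = 'X_i by rewrite tnth_mktuple split_l.
have tau_r i : tnth tau (rshift m i) = 0 by rewrite tnth_mktuple split_r.
exists (g \mPo tau); split; last first.
  rewrite comp_mpolyA -{1}(@psi_all m g Hred Hsw Hdis m (leqnn m)).
  apply: comp_mpoly_ext; apply: ord_cases => i;
    rewrite !tnth_mktuple ?split_l ?split_r ?psi_l ?psi_r ltn_ord.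
    by rewrite comp_mpolyXU -tnth_nth tnth_mktuple.
  by rewrite comp_mpoly0.
rewrite comp_mpolyA -[in RHS]Hrot comp_mpolyA.
have hm1 : (m.-1 < m)%N by lia.
pose im : 'I_m := Ordinal hm1.
rewrite -[in RHS](Hsw im) /swap_vars comp_mpolyA.
apply: comp_mpoly_ext; apply: ord_cases => i; rewrite !tnth_mktuple.
  rewrite split_l comp_mpolyXU -tnth_nth tnth_mktuple.
  rewrite eq_lshift eq_lrshift.
  case: (eqVneq i im) => [->|ne]; rewrite comp_mpolyXU -tnth_nth !tnth_mktuple comp_mpolyXU -tnth_nth.
    have -> : ordS (rshift m im) = lshift m (ordS im).
      apply/val_inj => /=; rewrite prednK // modnn.
      by rewrite -addnS prednK // modnn.
    by rewrite tau_l.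
  have hi : (i.+1 < m)%N.
    have : (nat_of_ord i != m.-1)%N by apply: contra ne => /eqP h; apply/eqP/val_inj.
    have := ltn_ord i; lia.
  have -> : ordS (lshift m i) = lshift m (ordS i).
    by apply/val_inj => /=; rewrite !modn_small //; lia.
  by rewrite tau_l.
rewrite split_r comp_mpoly0 eq_rlshift eq_rshift.
case: (eqVneq i im) => [_|ne]; rewrite comp_mpolyXU -tnth_nth !tnth_mktuple comp_mpolyXU -tnth_nth.
  have -> : ordS (lshift m im) = rshift m (Ordinal hm).
    by apply/val_inj => /=; rewrite prednK // modn_small //; lia.
  by rewrite tau_r.
have hi : (i.+1 < m)%N.
  have : (nat_of_ord i != m.-1)%N by apply: contra ne => /eqP h; apply/eqP/val_inj.
  have := ltn_ord i; lia.
have -> : ordS (rshift m i) = rshift m (ordS i).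
  by apply/val_inj => /=; rewrite !modn_small //; lia.
by rewrite tau_r.
Qed.
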